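(* For a composition $I$, let $\mathcal C_I=\sum_{\sigma:\ \mathrm{SC}(\sigma)=I}\mathbf G_\sigma\in\mathbf{FQSym}$ (with $\mathcal C_{\emptyset}=\mathbf G_{\emptyset}=1$). Then the elements $\mathcal C_I$ span a sub-coalgebra of $\mathbf{FQSym}$; more precisely, for every composition $I$ there are nonnegative integers $a_I^{JK}$ such that $$\Delta\,\mathcal C_I=\sum_{J,K}a_I^{JK}\,\mathcal C_J\otimes\mathcal C_K,$$ the sum running over pairs of (possibly empty) compositions $J,K$.
   Context: Permutations are viewed as words. A word $a_1\cdots a_m$ is initially dominated if $a_1>a_j$ for all $j\ge2$; every permutation $\sigma$ factors uniquely as $\sigma=u_1\cdots u_r$ into initially dominated words with increasing first letters, and its saillance composition is $\mathrm{SC}(\sigma)=(|u_1|,\ldots,|u_r|)$. $\mathbf{FQSym}$ is the Hopf algebra of free quasi-symmetric functions (over $\mathbb Q$), with basis $\mathbf G_\sigma$, $\sigma$ ranging over all permutations of all sizes $n\ge0$, and coproduct $\Delta\mathbf G_\sigma=\sum_{k=0}^{n}\mathbf G_{\sigma|_{[1,k]}}\otimes\mathbf G_{\mathrm{std}(\sigma|_{[k+1,n]})}$ for $\sigma\in\mathfrak S_n$, where $\sigma|_{[a,b]}$ is the subword of $\sigma$ formed by the letters in $[a,b]$ and $\mathrm{std}$ denotes standardization. *)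

(* Defs.v *)
From mathcomp Require Import all_boot all_order all_algebra.
Set Implicit Arguments. Unset Strict Implicit. Unset Printing Implicit Defensive.
Import GRing.Theory Num.Theory.

Definition is_permw (w : seq nat) : bool := perm_eq w (iota 1 (size w)).

Definition is_composition (I : seq nat) : bool := all (fun i => 0 < i) I.

Definition init_dominated (u : seq nat) : bool :=
  if u is a :: t then all (fun x => x < a) t else false.

Definition is_saillance_fact (u : seq (seq nat)) (s : seq nat) : bool :=
  [&& flatten u == s, all init_dominated u &
      sorted ltn [seq head 0 x | x <- u]].

(* Computation of the saillance composition: the greedy scan which starts a
   new factor exactly when the next letter exceeds the first letter of the
   current factor.  [m] is the first letter of the current factor and [cur]
   its length so far. *)
Fixpoint sc_aux (m cur : nat) (s : seq nat) : seq nat :=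
  match s with
  | [::] => [:: cur]
  | x :: t => if m < x then cur :: sc_aux x 1 t else sc_aux m cur.+1 t
  end.

Definition SC (s : seq nat) : seq nat :=
  if s is x :: t then sc_aux x 1 t else [::].

Definition restrict (s : seq nat) (a b : nat) : seq nat :=
  [seq x <- s | (a <= x) && (x <= b)].

Definition std (w : seq nat) : seq nat :=
  [seq (count (fun y => y < x) w).+1 | x <- w].

(* An element of FQSym (coefficients in Q) is given by its coefficient
   function on the basis G_sigma; an element of FQSym (x) FQSym by its
   coefficient function on the basis G_alpha (x) G_beta. *)

(* Coefficients of Delta G_sigma, sigma in S_n:
   Delta G_sigma = sum_{k=0}^n G_{sigma|[1,k]} (x) G_{std(sigma|[k+1,n])}. *)
Definition DeltaG (s : seq nat) (al be : seq nat) : rat :=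
  \sum_(k < (size s).+1)
     ((al == restrict s 1 k) && (be == std (restrict s k.+1 (size s))))%:R.

Definition Cc (I : seq nat) (s : seq nat) : rat :=
  (is_permw s && (SC s == I))%:R.

(* Delta C_I, computed by linearity: all sigma with SC(sigma) = I lie in
   S_n with n = |I| = sumn I. *)
Definition DeltaC (I : seq nat) (al be : seq nat) : rat :=
  \sum_(s <- permutations (iota 1 (sumn I))) Cc I s * DeltaG s al be.

(* Main.v *)
Require Import Defs.
From mathcomp Require Import all_boot all_order all_algebra zify.
Import GRing.Theory Num.Theory.
Set Implicit Arguments. Unset Strict Implicit. Unset Printing Implicit Defensive.

Fixpoint shuf (m : bitseq) (u v : seq nat) : seq nat :=
  match m with
  | [::] => [::]
  | b :: m' => if b then head 0 v :: shuf m' u (behead v)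
               else head 0 u :: shuf m' (behead u) v
  end.

Definition mk (k : nat) (s : seq nat) : bitseq := [seq k < x | x <- s].

Fixpoint recs (M : nat) (s : seq nat) : bitseq :=
  match s with
  | [::] => [::]
  | x :: t => if M < x then true :: recs x t else false :: recs M t
  end.

Fixpoint G (c : nat) (b : bitseq) : seq nat :=
  match b with
  | [::] => [:: c]
  | true :: b' => c :: G 1 b'
  | false :: b' => G c.+1 b'
  end.

Fixpoint R2 (m bv : bitseq) : bitseq :=
  match m with
  | [::] => [::]
  | b :: m' => if b then head false bv :: R2 m' (behead bv) else false :: R2 m' bv
  end.

Fixpoint R (m bu bv : bitseq) : bitseq :=
  match m with
  | [::] => [::]
  | b :: m' => if b then head false bv :: R2 m' (behead bv)
               else head false bu :: R m' (behead bu) bv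
  end.

Lemma sc_auxE t m c : sc_aux m c t = G c (recs m t).
Proof. by elim: t m c => [|x t IH] m c //=; case: ifP => _; rewrite IH. Qed.

Lemma G_pos b c : 0 < c -> all (fun i => 0 < i) (G c b).
Proof.
elim: b c => [|[] b IH] c Hc /=; first by rewrite Hc.
  by rewrite Hc IH.
by apply: IH.
Qed.

Lemma SC_comp s : is_composition (SC s).
Proof. by case: s => //= x t; rewrite /is_composition sc_auxE G_pos. Qed.

Lemma size_recs s M : size (recs M s) = size s.
Proof. by elim: s M => //= x s IH M; case: ifP => _ /=; rewrite IH. Qed.

Lemma G_head b c : c <= head 0 (G c b).
Proof.
elim: b c => [|[] b IH] c //=.
by apply: leq_trans (IH _).
Qed.

Lemma G_size b c : 0 < size (G c b).
Proof. by elim: b c => [|[] b IH] c //=. Qed.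

Lemma G_inj b b' c : G c b = G c b' -> b = b'.
Proof.
elim: b b' c => [|x b IH] [|y b'] c //=.
- case: y => /= E.
    by have := G_size b' 1; case: E => <-.
  by have := G_head b' c.+1; rewrite -E /= ltnn.
- case: x => /= E.
    by have := G_size b 1; case: E => ->.
  by have := G_head b c.+1; rewrite E /= ltnn.
- case: x; case: y => /= E.
  + by case: E => /IH ->.
  + by have := G_head b' c.+1; rewrite -E /= ltnn.
  + by have := G_head b c.+1; rewrite E /= ltnn.
  + by rewrite (IH _ _ E).
Qed.

Lemma recs_SC s s' : all (fun x => 0 < x) s -> all (fun x => 0 < x) s' ->
  SC s = SC s' -> recs 0 s = recs 0 s'.
Proof.
case: s => [|x t]; case: s' => [|x' t'] //=.
- by rewrite sc_auxE => _ _ E; have := G_size (recs x' t') 1; rewrite -E.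
- by rewrite sc_auxE => _ _ E; have := G_size (recs x t) 1; rewrite E.
- move=> /andP[-> _] /andP[-> _]; rewrite !sc_auxE => /G_inj -> //.
Qed.

Lemma SC_recs s s' : all (fun x => 0 < x) s -> all (fun x => 0 < x) s' ->
  recs 0 s = recs 0 s' -> SC s = SC s'.
Proof.
case: s => [|x t]; case: s' => [|x' t'] //=.
- by case: ifP.
- by case: ifP.
- move=> /andP[-> _] /andP[-> _] [E]; by rewrite !sc_auxE E.
Qed.

Lemma recs_shuf2 m M u v : all (fun x => x <= M) u ->
  recs M (shuf m u v) = R2 m (recs M v).
Proof.
elim: m M u v => [|b m IH] M u v Hu //=.
case: b => /=.
- case: v => [|y v] /=; first by rewrite ?ltn0 IH.
  case: ltnP => H /=; rewrite IH //.
  by apply: sub_all Hu => x /= Hx; apply: leq_trans Hx (ltnW H).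
- case: u Hu => [|x u] /=; first by rewrite ?ltn0 => _; rewrite IH.
  by move=> /andP[Hx Hu]; rewrite ltnNge Hx /= IH.
Qed.

Lemma recs_shuf m Mu u v k : Mu <= k -> all (fun x => x <= k) u ->
  all (fun x => k < x) v -> count id m = size v ->
  recs Mu (shuf m u v) = R m (recs Mu u) (recs 0 v).
Proof.
elim: m Mu u v => [|b m IH] Mu u v HM Hu Hv Hc //=.
case: b Hc => /= Hc.
- case: v Hv Hc => [|y v] //= /andP[Hy Hv] [Hc].
  have -> : Mu < y by apply: leq_ltn_trans Hy.
  have -> : 0 < y by apply: leq_ltn_trans Hy.
  rewrite /= recs_shuf2 //.
  by apply: sub_all Hu => x /= Hx; apply: leq_trans Hx (ltnW Hy).
- case: u Hu => [|x u] /=; first by move=> _; rewrite ?ltn0 /= IH.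
  move=> /andP[Hx Hu]; case: ltnP => H /=; rewrite IH //.
Qed.

Lemma recs_add v M k : recs (k + M) (map (addn k) v) = recs M v.
Proof.
by elim: v M => //= x v IH M; rewrite ltn_add2l; case: ifP => _; rewrite IH.
Qed.

Lemma recs0_add v k : all (fun x => 0 < x) v -> recs 0 (map (addn k) v) = recs 0 v.
Proof.
case: v => //= x v /andP[Hx _]; rewrite Hx.
have -> : 0 < k + x by lia.
by rewrite recs_add.
Qed.

Lemma shuf_mk s k :
  shuf (mk k s) [seq x <- s | x <= k] [seq x <- s | k < x] = s.
Proof.
by elim: s => //= x s IH; case: (ltnP k x) => H /=; rewrite IH.
Qed.

Lemma mk_shuf m u v k : all (fun x => x <= k) u -> all (fun x => k < x) v ->
  count negb m = size u -> count id m = size v -> mk k (shuf m u v) = m.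
Proof.
elim: m u v => [|b m IH] u v Hu Hv Hcu Hcv //=.
case: b Hcu Hcv => /= Hcu Hcv.
- case: v Hv Hcv => [|y v] //= /andP[Hy Hv] [Hcv].
  by rewrite Hy IH.
- case: u Hu Hcu => [|x u] //= /andP[Hx Hu] [Hcu].
  by rewrite ltnNge Hx IH.
Qed.

Lemma filter_shuf_le m u v k : all (fun x => x <= k) u -> all (fun x => k < x) v ->
  count negb m = size u -> count id m = size v ->
  [seq x <- shuf m u v | x <= k] = u.
Proof.
elim: m u v => [|b m IH] u v Hu Hv Hcu Hcv /=.
  by case: u Hu Hcu.
case: b Hcu Hcv => /= Hcu Hcv.
- case: v Hv Hcv => [|y v] //= /andP[Hy Hv] [Hcv].
  by rewrite leqNgt Hy IH.
- case: u Hu Hcu => [|x u] //= /andP[Hx Hu] [Hcu].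
  by rewrite Hx IH.
Qed.

Lemma filter_shuf_gt m u v k : all (fun x => x <= k) u -> all (fun x => k < x) v ->
  count negb m = size u -> count id m = size v ->
  [seq x <- shuf m u v | k < x] = v.
Proof.
elim: m u v => [|b m IH] u v Hu Hv Hcu Hcv /=.
  by case: v Hv Hcv.
case: b Hcu Hcv => /= Hcu Hcv.
- case: v Hv Hcv => [|y v] //= /andP[Hy Hv] [Hcv].
  by rewrite Hy IH.
- case: u Hu Hcu => [|x u] //= /andP[Hx Hu] [Hcu].
  by rewrite ltnNge Hx IH.
Qed.

Lemma perm_shuf m u v :
  count negb m = size u -> count id m = size v -> perm_eq (shuf m u v) (u ++ v).
Proof.
elim: m u v => [|b m IH] u v Hcu Hcv /=.
  by case: u Hcu; case: v Hcv.
case: b Hcu Hcv => /= Hcu Hcv.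
- case: v Hcv => [|y v] //= [Hcv].
  have H1 : perm_eq (y :: shuf m u v) (y :: (u ++ v)) by rewrite perm_cons IH.
  apply: perm_trans H1 _; apply/permPl; exact: (perm_catCA [:: y] u v).
- case: u Hcu => [|x u] //= [Hcu].
  by rewrite perm_cons IH.
Qed.

Lemma iota_split a n c : a <= c <= a + n ->
  iota a n = iota a (c - a) ++ iota c (a + n - c).
Proof.
move=> /andP[H1 H2].
have {1}-> : n = (c - a) + (a + n - c) by lia.
by rewrite iotaD subnKC.
Qed.

Lemma filter_lt_iota a n c : a <= c <= a + n ->
  [seq y <- iota a n | y < c] = iota a (c - a).
Proof.
move=> H; rewrite (iota_split H) filter_cat.
rewrite (eq_in_filter (a2 := predT)); last first.
  by move=> x; rewrite mem_iota => /andP[_]; rewrite subnKC //; case/andP: H.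
rewrite (eq_in_filter (s := iota c _) (a2 := pred0)); last first.
  by move=> x; rewrite mem_iota /= => /andP[Hx _]; rewrite ltnNge Hx.
by rewrite filter_predT filter_pred0 cats0.
Qed.

Lemma filter_ge_iota a n c : a <= c <= a + n ->
  [seq y <- iota a n | c <= y] = iota c (a + n - c).
Proof.
move=> H; rewrite (iota_split H) filter_cat.
rewrite (eq_in_filter (a2 := pred0)); last first.
  move=> x; rewrite mem_iota => /andP[_ Hx] /=; apply/negbTE; rewrite -ltnNge.
  by case/andP: H => H1 H2; lia.
rewrite (eq_in_filter (s := iota c _) (a2 := predT)); last first.
  by move=> x; rewrite mem_iota /= => /andP[Hx _].
by rewrite filter_predT filter_pred0.
Qed.

Lemma count_lt_iota a n x : a <= x <= a + n ->
  count (fun y => y < x) (iota a n) = x - a.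
Proof. by move=> H; rewrite -size_filter filter_lt_iota // size_iota. Qed.

Lemma perm_iota_mem w a n x : perm_eq w (iota a n) -> x \in w -> a <= x < a + n.
Proof. by move=> /perm_mem ->; rewrite mem_iota. Qed.

Lemma std_iota w a n : perm_eq w (iota a.+1 n) -> std w = [seq x - a | x <- w].
Proof.
move=> Hw; rewrite /std; apply/eq_in_map => x Hx.
rewrite (permP Hw) count_lt_iota.
  by have := perm_iota_mem Hw Hx; lia.
by have := perm_iota_mem Hw Hx; lia.
Qed.

Lemma std_add w k : std (map (addn k) w) = std w.
Proof.
rewrite /std -map_comp; apply: eq_map => x /=.
by rewrite count_map; congr (_.+1); apply: eq_count => y /=; rewrite ltn_add2l.
Qed.

Lemma std_perm w : is_permw w -> std w = w.
Proof.
move=> Hw; rewrite (std_iota (a := 0) Hw).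
by rewrite (eq_map (g := id)) ?map_id // => x; rewrite subn0.
Qed.

Definition Dn (I : seq nat) (N : nat) (al be : seq nat) : nat :=
  \sum_(s <- permutations (iota 1 N)) (SC s == I) *
    \sum_(k < N.+1) ((al == restrict s 1 k) && (be == std (restrict s k.+1 N))).

Definition Pr (I : seq nat) (N : nat) (al be : seq nat) (s : seq nat) : bool :=
  [&& SC s == I, al == restrict s 1 (size al) & be == std (restrict s (size al).+1 N)].

Lemma restrict_le s N k : perm_eq s (iota 1 N) -> restrict s 1 k = [seq x <- s | x <= k].
Proof.
move=> Hs; rewrite /restrict; apply: eq_in_filter => x /(perm_iota_mem Hs) /andP[H1 _].
by rewrite H1.
Qed.

Lemma restrict_gt s N k : perm_eq s (iota 1 N) -> restrict s k.+1 N = [seq x <- s | k < x].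
Proof.
move=> Hs; rewrite /restrict; apply: eq_in_filter => x /(perm_iota_mem Hs) /andP[_ H2].
by rewrite (_ : x <= N) ?andbT //; lia.
Qed.

Lemma size_restrict s N k : perm_eq s (iota 1 N) -> k <= N -> size (restrict s 1 k) = k.
Proof.
move=> Hs Hk; rewrite (restrict_le _ Hs) size_filter (permP Hs).
rewrite (eq_count (a2 := fun y => y < k.+1)); last by move=> y; rewrite ltnS.
by rewrite count_lt_iota ?subn1 //; lia.
Qed.

Lemma sum_eq n a (c : bool) : \sum_(k < n) ((k == a :> nat) && c) = (a < n) * c.
Proof.
case: (ltnP a n) => H.
  rewrite (bigD1 (Ordinal H)) //= eqxx big1 ?addn0 ?mul1n //.
  by move=> i; rewrite -val_eqE /= => /negbTE ->.
rewrite big1 // => i _; have := ltn_ord i; case: eqP => //= E Hi; exfalso; lia.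
Qed.

Lemma sum_count (l : seq (seq nat)) c (b : pred (seq nat)) :
  \sum_(s <- l) (c * (b s : nat)) = c * count b l.
Proof.
elim: l => [|x l IH]; first by rewrite big_nil muln0.
by rewrite big_cons IH /= mulnDr.
Qed.

Lemma DnE I N al be :
  Dn I N al be = (size al <= N) * count (Pr I N al be) (permutations (iota 1 N)).
Proof.
rewrite -sum_count /Dn big_seq [RHS]big_seq; apply: eq_bigr => s.
rewrite mem_permutations => Hs.
rewrite (eq_bigr (fun k : 'I_N.+1 => ((k == size al :> nat) &&
   ((al == restrict s 1 (size al)) && (be == std (restrict s (size al).+1 N))) : nat))).
  rewrite sum_eq ltnS /Pr.
  by case: (SC s == I); case: (size al <= N); case: (_ && _).
move=> k _; case: (eqVneq (k : nat) (size al)) => [Ek|Nk].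
  by rewrite -Ek.
case E: (al == restrict s 1 k) => //=; exfalso; move/eqP: Nk; apply.
by rewrite (eqP E) (size_restrict Hs) // -ltnS.
Qed.

Lemma permw_pos w : is_permw w -> all (fun x => 0 < x) w.
Proof. by move=> Hw; apply/allP => x /(perm_iota_mem Hw) /andP[]. Qed.

Lemma decomp I N al be s : perm_eq s (iota 1 N) -> size al <= N ->
  Pr I N al be s ->
  [/\ al = [seq x <- s | x <= size al],
      map (addn (size al)) be = [seq x <- s | size al < x],
      size be = N - size al & SC s = I].
Proof.
move=> Hs Hk /and3P[/eqP HI /eqP Ha /eqP Hb].
rewrite (restrict_le _ Hs) in Ha; rewrite (restrict_gt _ Hs) in Hb.
set ka := size al in Ha Hb Hk *.
set w := [seq x <- s | ka < x] in Hb *.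
have Hw : perm_eq w (iota ka.+1 (1 + N - ka.+1)).
  rewrite -filter_ge_iota; first exact: perm_filter.
  by lia.
have Hb' : map (addn ka) be = w.
  rewrite Hb (std_iota Hw) -map_comp; apply: map_id_in => x.
  by rewrite mem_filter /= => /andP[Hx _]; rewrite subnKC // ltnW.
split => //.
rewrite -(size_map (addn ka)) Hb' (perm_size Hw) size_iota; lia.
Qed.

Lemma pos_of_perm w n : perm_eq w (iota 1 n) -> all (fun x => 0 < x) w.
Proof. by move=> Hw; apply/allP => x /(perm_iota_mem Hw) /andP[]. Qed.

Lemma inj_count I N al be al' be' :
  is_permw al -> is_permw al' -> is_permw be -> is_permw be' ->
  recs 0 al = recs 0 al' -> recs 0 be = recs 0 be' -> size al <= N ->
  count (Pr I N al be) (permutations (iota 1 N)) <=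
  count (Pr I N al' be') (permutations (iota 1 N)).
Proof.
move=> Ha Ha' Hb Hb' Ea Eb Hk.
have Eka : size al' = size al by rewrite -(size_recs al' 0) -Ea size_recs.
have Ekb : size be' = size be by rewrite -(size_recs be' 0) -Eb size_recs.
set P := permutations (iota 1 N).
set ka := size al in Hk Eka *.
pose Phi s := shuf (mk ka s) al' (map (addn ka) be').
have key : forall s, s \in filter (Pr I N al be) P ->
  [/\ s = shuf (mk ka s) al (map (addn ka) be), count negb (mk ka s) = ka,
      count id (mk ka s) = size be, perm_eq s (iota 1 N) &
      size be = N - ka /\ SC s = I].
  move=> s; rewrite mem_filter mem_permutations => /andP[HP Hs].
  have [E1 E2 E3 E4] := decomp Hs Hk HP.
  split => //.
  - by rewrite -{1}(shuf_mk s ka) -E1 -E2.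
  - rewrite count_map (eq_count (a2 := fun x => x <= ka)); last by move=> x /=; rewrite -leqNgt.
    by rewrite -size_filter -E1.
  - rewrite count_map (eq_count (a2 := fun x => ka < x)) //.
    by rewrite -size_filter -E2 size_map.
have al'le : all (fun x => x <= ka) al'.
  by apply/allP => x /(perm_iota_mem Ha'); rewrite Eka => /andP[H1 H2]; lia.
have alle : all (fun x => x <= ka) al.
  by apply/allP => x /(perm_iota_mem Ha) => /andP[H1 H2]; lia.
have be'gt : all (fun x => ka < x) (map (addn ka) be').
  by rewrite all_map; apply/allP => x /(perm_iota_mem Hb') /andP[H1 _] /=; lia.
have begt : all (fun x => ka < x) (map (addn ka) be).
  by rewrite all_map; apply/allP => x /(perm_iota_mem Hb) /andP[H1 _] /=; lia.
have Phi_mk : forall s, s \in filter (Pr I N al be) P -> mk ka (Phi s) = mk ka s.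
  move=> s /key [_ c1 c2 _ _]; apply: mk_shuf => //.
    by rewrite Eka.
  by rewrite size_map Ekb.
rewrite -!size_filter -(size_map Phi); apply: uniq_leq_size.
  rewrite map_inj_in_uniq ?filter_uniq ?permutations_uniq //.
  move=> s1 s2 H1 H2 E.
  have [e1 _ _ _ _] := key s1 H1; have [e2 _ _ _ _] := key s2 H2.
  have M : mk ka s1 = mk ka s2 by rewrite -(Phi_mk s1 H1) -(Phi_mk s2 H2) E.
  by rewrite e1 M -e2.
move=> t /mapP[s Hs ->].
have [e1 c1 c2 Hs' [E3 E4]] := key s Hs.
have cu : count negb (mk ka s) = size al' by rewrite Eka.
have cv : count id (mk ka s) = size (map (addn ka) be') by rewrite size_map Ekb.
have HPs : perm_eq (Phi s) (iota 1 N).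
  apply: perm_trans (perm_shuf cu cv) _.
  have -> : iota 1 N = iota 1 ka ++ iota (1 + ka) (N - ka).
    by rewrite -iotaD subnKC.
  apply: perm_cat; first by rewrite -Eka.
  rewrite addnC iotaDl perm_map //.
  by rewrite -E3 -Ekb.
rewrite mem_filter mem_permutations HPs andbT /Pr Eka.
apply/and3P; split.
- rewrite -E4; apply/eqP; apply: SC_recs (pos_of_perm HPs) (pos_of_perm Hs') _.
  rewrite /Phi (recs_shuf (k := ka)) // [in RHS]e1 (recs_shuf (k := ka)) //.
    by rewrite !recs0_add ?(permw_pos Hb) ?(permw_pos Hb') // Ea Eb.
  by rewrite c2 size_map.
- by rewrite (restrict_le _ HPs) (filter_shuf_le al'le be'gt cu cv).
- by rewrite (restrict_gt _ HPs) (filter_shuf_gt al'le be'gt cu cv) std_add std_perm.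
Qed.

Lemma Dn_inv I N al be al' be' :
  is_permw al -> is_permw al' -> is_permw be -> is_permw be' ->
  SC al = SC al' -> SC be = SC be' -> Dn I N al be = Dn I N al' be'.
Proof.
move=> Ha Ha' Hb Hb' Sa Sb.
have Ea := recs_SC (permw_pos Ha) (permw_pos Ha') Sa.
have Eb := recs_SC (permw_pos Hb) (permw_pos Hb') Sb.
have Eka : size al' = size al by rewrite -(size_recs al' 0) -Ea size_recs.
rewrite !DnE Eka; case Hk: (size al <= N); last by rewrite !mul0n.
rewrite !mul1n; apply/anti_leq/andP; split; first exact: inj_count.
apply: inj_count => //; by rewrite Eka.
Qed.

Lemma DeltaC_Dn I al be : DeltaC I al be = ((Dn I (sumn I) al be)%:R)%R.
Proof.
rewrite /DeltaC /Dn natr_sum big_seq [RHS]big_seq; apply: eq_bigr => s.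
rewrite mem_permutations => Hs.
have Hsz : size s = sumn I by rewrite (perm_size Hs) size_iota.
rewrite /Cc /DeltaG /is_permw Hsz Hs /= natrM natr_sum.
by [].
Qed.

Lemma Dn_nz I N al be : Dn I N al be != 0 ->
  [/\ is_permw al, is_permw be, size al <= N & size be <= N].
Proof.
rewrite DnE; case Hk: (size al <= N); last by rewrite mul0n.
rewrite mul1n -lt0n -has_count => /hasP [s Hs HP].
move: Hs; rewrite mem_permutations => Hs.
have [E1 E2 E3 E4] := decomp Hs Hk HP.
split => //.
- rewrite /is_permw {1}E1.
  have -> : [seq x <- s | x <= size al] = [seq x <- s | x < (size al).+1].
    by apply: eq_filter => x; rewrite ltnS.
  have -> : iota 1 (size al) = [seq x <- iota 1 N | x < (size al).+1].
    by rewrite filter_lt_iota ?subn1 //; lia.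
  exact: perm_filter.
- rewrite /is_permw; apply: (perm_map_inj (@addnI (size al))).
  rewrite E2 E3 -iotaDl.
  have -> : iota (size al + 1) (N - size al) = [seq x <- iota 1 N | (size al).+1 <= x].
    by rewrite filter_ge_iota; [congr iota; lia | lia].
  exact: perm_filter.
- by rewrite E3 leq_subr.
Qed.

Definition Xs (N : nat) : seq (seq nat) :=
  flatten [seq permutations (iota 1 k) | k <- iota 0 N.+1].

Lemma Xs_permw N x : x \in Xs N -> is_permw x.
Proof.
move=> /flattenP [l /mapP [k _ ->]]; rewrite mem_permutations => H.
by rewrite /is_permw (perm_size H) size_iota.
Qed.

Lemma Xs_in N x : is_permw x -> size x <= N -> x \in Xs N.
Proof.
move=> Hx Hs; apply/flattenP; exists (permutations (iota 1 (size x))).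
  by apply/mapP; exists (size x) => //; rewrite mem_iota; lia.
by rewrite mem_permutations.
Qed.

Theorem mainTheorem2 (I : seq nat) (hI : is_composition I) :
  exists (L : seq (seq nat * seq nat)) (a : seq nat -> seq nat -> nat),
    [/\ uniq L,
        all (fun p => is_composition p.1 && is_composition p.2) L &
        forall al be : seq nat,
          DeltaC I al be =
          (\sum_(p <- L) (a p.1 p.2)%:R * (Cc p.1 al * Cc p.2 be))%R].
Proof.
set N := sumn I.
set Q := [seq (x, y) | x <- Xs N, y <- Xs N].
set L := undup [seq (SC p.1, SC p.2) | p <- Q].
pose rep J K := nth ([::], [::]) Q (find (fun p => (SC p.1 == J) && (SC p.2 == K)) Q).
exists L, (fun J K => Dn I N (rep J K).1 (rep J K).2).
split.
- exact: undup_uniq.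
- apply/allP => p; rewrite mem_undup => /mapP [q _ ->] /=.
  by rewrite !SC_comp.
move=> al be; rewrite DeltaC_Dn -/N.
case h: [&& is_permw al, is_permw be & (SC al, SC be) \in L].
- case/and3P: h => Ha Hb HL.
  rewrite (bigD1_seq (SC al, SC be)) ?undup_uniq //=.
  rewrite big1 ?addr0; last first.
    move=> p Hp; rewrite /Cc Ha Hb /=.
    case E1: (SC al == p.1); case E2: (SC be == p.2); rewrite ?mul0r ?mulr0 //.
    by move: Hp; rewrite (eqP E1) (eqP E2) -surjective_pairing eqxx.
  rewrite /Cc Ha Hb !eqxx /= !mulr1; congr (_%:R)%R.
  move: HL; rewrite mem_undup => /mapP [q Hq Eq].
  have Hhas : has (fun p => (SC p.1 == SC al) && (SC p.2 == SC be)) Q.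
    by apply/hasP; exists q => //; case: Eq => -> ->; rewrite !eqxx.
  have := nth_find ([::], [::]) Hhas; rewrite -/(rep _ _) => /andP [/eqP S1 /eqP S2].
  have : rep (SC al) (SC be) \in Q by rewrite /rep mem_nth // -has_find.
  move: S1 S2; case: (rep (SC al) (SC be)) => x y /= S1 S2 /allpairsP [[x' y'] /= [Hx Hy [E1 E2]]].
  subst x y.
  apply: Dn_inv => //; [exact: Xs_permw Hx | exact: Xs_permw Hy].
- rewrite big1_seq; last first.
    move=> p /andP [_ Hp]; rewrite /Cc.
    case E1: (is_permw al && (SC al == p.1)); case E2: (is_permw be && (SC be == p.2));
      rewrite ?mul0r ?mulr0 //.
    move/andP: E1 => [Ha /eqP E1]; move/andP: E2 => [Hb /eqP E2].
    by move: h; rewrite Ha Hb E1 E2 -surjective_pairing Hp.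
  case E: (Dn I N al be) => [|n] //.
  have [Ha Hb Hka Hkb] : [/\ is_permw al, is_permw be, size al <= N & size be <= N].
    by apply: (Dn_nz (I := I)); rewrite E.
  move: h; rewrite Ha Hb /= mem_undup.
  have -> : (SC al, SC be) \in [seq (SC p.1, SC p.2) | p <- Q].
    apply: (map_f (fun p => (SC p.1, SC p.2)) (x := (al, be))).
    by apply/allpairsP; exists (al, be); split => //; apply: Xs_in.
  by [].
Qed.
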